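(* Let $(\mathbf{x}_i,y_i)_{i=1}^n\subset\mathbb{R}^d\times\{\pm1\}$ satisfy $\|\mathbf{x}_i\|\le1$ and $y_i\mathbf{x}_i^\top\mathbf{w}_*\ge\gamma$ for some $\gamma>0$ and unit vector $\mathbf{w}_*$. Let $L(\mathbf{w})=\frac1n\sum_i\ln(1+\exp(-y_i\mathbf{x}_i^\top\mathbf{w}))$ and run GD $\mathbf{w}_{t+1}=\mathbf{w}_t-\eta\nabla L(\mathbf{w}_t)$ with any $\eta>0$ and any $\mathbf{w}_0$. For any $\mathbf{u}_1\in\mathbb{R}^d$, let $\mathbf{u}_2=\frac{\eta}{2\gamma}\mathbf{w}_*$ and $\mathbf{u}=\mathbf{u}_1+\mathbf{u}_2$. Then for all $t\ge1$, \[\frac{\|\mathbf{w}_t-\mathbf{u}\|^2}{2\eta t}+\frac1t\sum_{k=0}^{t-1}L(\mathbf{w}_k)\le L(\mathbf{u}_1)+\frac{\|\mathbf{w}_0-\mathbf{u}\|^2}{2\eta t}.\] *)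

(* Defs.v *)
From HB Require Import structures.
From mathcomp Require Import all_boot all_order all_algebra.
From mathcomp Require Import all_classical all_reals all_analysis.
Set Implicit Arguments. Unset Strict Implicit. Unset Printing Implicit Defensive.
Import Order.TTheory GRing.Theory Num.Theory.
Local Open Scope ring_scope.

Definition dotv {R : realType} {d : nat} (a b : 'rV[R]_d) : R :=
  \sum_(j < d) a ord0 j * b ord0 j.
Definition sqnorm {R : realType} {d : nat} (a : 'rV[R]_d) : R := dotv a a.

Definition logloss {R : realType} {d n : nat} (x : 'I_n -> 'rV[R]_d)
  (y : 'I_n -> R) (w : 'rV[R]_d) : R :=
  n%:R^-1 * \sum_(i < n) ln (1 + expR (- (y i * dotv (x i) w))).

Definition logloss_grad {R : realType} {d n : nat} (x : 'I_n -> 'rV[R]_d)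
  (y : 'I_n -> R) (w : 'rV[R]_d) : 'rV[R]_d :=
  n%:R^-1 *: \sum_(i < n)
    ((- (expR (- (y i * dotv (x i) w)) / (1 + expR (- (y i * dotv (x i) w))))
       * y i) *: x i).

Fixpoint gd_iter {R : realType} {d n : nat} (x : 'I_n -> 'rV[R]_d)
  (y : 'I_n -> R) (eta : R) (w0 : 'rV[R]_d) (t : nat) : 'rV[R]_d :=
  match t with
  | 0%N => w0
  | t'.+1 => let w := gd_iter x y eta w0 t' in w - eta *: logloss_grad x y w
  end.

(* Main.v *)
Require Import Defs.
From HB Require Import structures.
From mathcomp Require Import all_boot all_order all_algebra.
From mathcomp Require Import all_classical all_reals all_analysis.
From mathcomp Require Import ring lra.
Import Order.TTheory GRing.Theory Num.Theory.
Local Open Scope ring_scope.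
Set Implicit Arguments. Unset Strict Implicit.

Lemma dotvC (R : realType) d (a b : 'rV[R]_d) : dotv a b = dotv b a.
Proof. by rewrite /dotv; apply: eq_bigr => j _; rewrite mulrC. Qed.
Lemma dotvDl (R : realType) d (a b c : 'rV[R]_d) : dotv (a + b) c = dotv a c + dotv b c.
Proof. rewrite /dotv -big_split /=; apply: eq_bigr => j _; by rewrite !mxE mulrDl. Qed.
Lemma dotvZl (R : realType) d k (a b : 'rV[R]_d) : dotv (k *: a) b = k * dotv a b.
Proof. rewrite /dotv mulr_sumr; apply: eq_bigr => j _; by rewrite !mxE mulrA. Qed.
Lemma dotvNl (R : realType) d (a b : 'rV[R]_d) : dotv (- a) b = - dotv a b.
Proof. by rewrite -scaleN1r dotvZl mulN1r. Qed.
Lemma dotvBl (R : realType) d (a b c : 'rV[R]_d) : dotv (a - b) c = dotv a c - dotv b c.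
Proof. by rewrite dotvDl dotvNl. Qed.
Lemma dotvDr (R : realType) d (a b c : 'rV[R]_d) : dotv c (a + b) = dotv c a + dotv c b.
Proof. by rewrite dotvC dotvDl !(dotvC c). Qed.
Lemma dotvZr (R : realType) d k (a b : 'rV[R]_d) : dotv b (k *: a) = k * dotv b a.
Proof. by rewrite dotvC dotvZl dotvC. Qed.
Lemma dotvBr (R : realType) d (a b c : 'rV[R]_d) : dotv c (a - b) = dotv c a - dotv c b.
Proof. by rewrite dotvC dotvBl !(dotvC c). Qed.
Lemma dotv_suml (R : realType) d n (v : 'I_n -> 'rV[R]_d) c :
  dotv (\sum_(i < n) v i) c = \sum_(i < n) dotv (v i) c.
Proof. rewrite /dotv exchange_big; apply: eq_bigr => j _; by rewrite summxE mulr_suml. Qed.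
Lemma sqnorm_ge0 (R : realType) d (a : 'rV[R]_d) : 0 <= sqnorm a.
Proof. rewrite /sqnorm /dotv sumr_ge0 // => j _; by rewrite -expr2 sqr_ge0. Qed.
Lemma sqnormD (R : realType) d k (a b : 'rV[R]_d) :
  sqnorm (a + k *: b) = sqnorm a + 2 * k * dotv a b + k ^+ 2 * sqnorm b.
Proof. rewrite /sqnorm !dotvDl !dotvDr !dotvZl !dotvZr (dotvC b a); ring. Qed.
Lemma cs1 (R : realType) d (a b : 'rV[R]_d) : sqnorm a <= 1 -> sqnorm b <= 1 ->
  dotv a b <= 1 /\ - dotv a b <= 1.
Proof.
move=> ha hb; have h1 := sqnorm_ge0 (a + 1 *: b); have h2 := sqnorm_ge0 (a + (-1) *: b).
rewrite sqnormD in h1; rewrite sqnormD in h2. split; nra.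
Qed.

Lemma tangent (R : realType) (m m' : R) :
  ln (1 + expR (- m)) + (- (expR (- m) / (1 + expR (- m)))) * (m' - m)
  <= ln (1 + expR (- m')).
Proof.
set s := expR (- m); set s' := expR (- m').
have s0 : 0 < s by rewrite expR_gt0.
have s'0 : 0 < s' by rewrite expR_gt0.
have hse : s * expR m = 1 by rewrite -expRD addNr expR0.
set l1 := ln (1 + s') - ln (1 + s).
have hs1 : 0 < 1 + s by lra.
have hs1' : 0 < 1 + s' by lra.
have E1 : expR (- l1) = (1 + s) / (1 + s').
  rewrite /l1 opprB expRD expRN !lnK //; by rewrite posrE.
have E2 : expR (- (l1 + (m' - m))) = (1 + s) / (1 + s') * s' * expR m.
  rewrite opprD expRD E1 opprB expRD -/s'; ring.
have h1 := expR_ge1Dx (- l1).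
have h2 := expR_ge1Dx (- (l1 + (m' - m))).
rewrite E1 in h1; rewrite E2 in h2.
set p := s / (1 + s).
have p0 : 0 <= p by rewrite divr_ge0 // ltW.
have p1 : 0 <= 1 - p.
  by rewrite subr_ge0 /p ler_pdivrMr // mul1r lerDr.
have key : (1 - p) * (1 - (1 + s) / (1 + s')) + p * (1 - (1 + s) / (1 + s') * s' * expR m) = 0.
  have em : expR m = s^-1 by rewrite /s expRN invrK.
  rewrite em /p; field; rewrite ?gt_eqF //.
have : (1 - p) * (1 - (1 + s) / (1 + s')) + p * (1 - (1 + s) / (1 + s') * s' * expR m)
   <= (1 - p) * l1 + p * (l1 + (m' - m)).
  by apply: lerD; apply: ler_wpM2l => //; lra.
rewrite key /l1 => h; lra.
Qed.

Lemma step (R : realType) (d n : nat)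
  (x : 'I_n -> 'rV[R]_d) (y : 'I_n -> R) (gamma eta : R)
  (wstar u1 : 'rV[R]_d)
  (hy : forall i, y i = 1 \/ y i = -1)
  (hx : forall i, sqnorm (x i) <= 1)
  (hsep : forall i, y i * dotv (x i) wstar >= gamma)
  (hgamma : 0 < gamma)
  (heta : 0 < eta) (w : 'rV[R]_d) :
  sqnorm (w - eta *: logloss_grad x y w - (u1 + (eta / (2 * gamma)) *: wstar))
  <= sqnorm (w - (u1 + (eta / (2 * gamma)) *: wstar))
     + 2 * eta * (logloss x y u1 - logloss x y w).
Proof.
set u := u1 + _.
set g := logloss_grad x y w.
pose gi := fun i => expR (- (y i * dotv (x i) w)) / (1 + expR (- (y i * dotv (x i) w))).
have gi0 : forall i, 0 <= gi i.
  move=> i; rewrite /gi; have := expR_gt0 (- (y i * dotv (x i) w)).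
  set e := expR _ => he; apply: divr_ge0; lra.
have gi1 : forall i, gi i <= 1.
  move=> i; rewrite /gi; have := expR_gt0 (- (y i * dotv (x i) w)).
  set e := expR _ => he; rewrite ler_pdivrMr; lra.
have dg : forall c, dotv g c = n%:R^-1 * \sum_(i < n) (- gi i * y i) * dotv (x i) c.
  move=> c; rewrite /g /logloss_grad dotvZl dotv_suml; congr (_ * _).
  by apply: eq_bigr => i _; rewrite dotvZl.
have ninv0 : 0 <= n%:R^-1 :> R by rewrite invr_ge0 ler0n.
set G := n%:R^-1 * \sum_(i < n) gi i.
have G0 : 0 <= G by rewrite mulr_ge0 // sumr_ge0.
have G1 : G <= 1.
  apply: (@le_trans _ _ (n%:R^-1 * \sum_(i < n) (1 : R))).
    by apply: ler_wpM2l => //; apply: ler_sum => i _.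
  rewrite sumr_const card_ord; case: n {x y hy hx hsep dg ninv0 G G0 g gi gi0 gi1} => [|n'].
    by rewrite invr0 mul0r.
  by rewrite -[1 *+ _]/(n'.+1%:R) mulVf // pnatr_eq0.
have hconv : logloss x y w + dotv g (u1 - w) <= logloss x y u1.
  rewrite dg /logloss -mulrDr; apply: ler_wpM2l => //.
  rewrite -big_split; apply: ler_sum => i _; rewrite dotvBr /=.
  have -> : (- gi i * y i) * (dotv (x i) u1 - dotv (x i) w)
     = (- gi i) * (y i * dotv (x i) u1 - y i * dotv (x i) w) by ring.
  exact: tangent.
have hws : dotv g wstar <= - (gamma * G).
  have -> : - (gamma * G) = n%:R^-1 * \sum_(i < n) - (gi i * gamma).
    by rewrite /G sumrN -mulr_suml; ring.
  rewrite dg; apply: ler_wpM2l => //; apply: ler_sum => i _.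
  have := hsep i; have := gi0 i; nra.
have hgg : sqnorm g <= G * G.
  rewrite /sqnorm {1}dg {2}/G -mulrA; apply: ler_wpM2l => //.
  rewrite mulr_suml; apply: ler_sum => i _.
  rewrite dotvC dg /G mulrCA [X in _ <= X]mulrCA; apply: ler_wpM2l => //.
  rewrite !mulr_sumr; apply: ler_sum => j _.
  have [c1 c2] := cs1 (hx j) (hx i).
  have hij : 0 <= gi i * gi j by rewrite mulr_ge0.
  by case: (hy i) => ->; case: (hy j) => ->; nra.
have -> : w - eta *: g - u = (w - u) + (- eta) *: g by rewrite scaleNr addrAC.
rewrite sqnormD.
have -> : dotv (w - u) g = - dotv g (u1 - w) - (eta / (2 * gamma)) * dotv g wstar.
  by rewrite /u dotvC dotvBr dotvDr dotvZr dotvBr; ring.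
have cpos : 0 <= 2 * eta * (eta / (2 * gamma)).
  by rewrite mulr_ge0 ?divr_ge0 ?mulr_ge0 // ltW.
have hB := ler_wpM2l cpos hws.
have ceq : 2 * eta * (eta / (2 * gamma)) * (- (gamma * G)) = - (eta ^+ 2 * G).
  by field; rewrite gt_eqF.
rewrite ceq in hB.
have e2 : 0 <= eta ^+ 2 by rewrite sqr_ge0.
have hg2 := ler_wpM2l e2 hgg.
have hGG : G * G <= G by nra.
have hg3 := ler_wpM2l e2 hGG.
have hA := ler_wpM2l (ltW (mulr_gt0 (ltr0n R 2) heta)) hconv.
rewrite sqrrN.
lra.
Qed.

Lemma iterb (R : realType) (d n : nat)
  (x : 'I_n -> 'rV[R]_d) (y : 'I_n -> R) (gamma eta : R)
  (wstar w0 u1 : 'rV[R]_d)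
  (hy : forall i, y i = 1 \/ y i = -1)
  (hx : forall i, sqnorm (x i) <= 1)
  (hsep : forall i, y i * dotv (x i) wstar >= gamma)
  (hgamma : 0 < gamma)
  (heta : 0 < eta) (t : nat) :
  sqnorm (gd_iter x y eta w0 t - (u1 + (eta / (2 * gamma)) *: wstar))
  + 2 * eta * \sum_(k < t) logloss x y (gd_iter x y eta w0 k)
  <= sqnorm (w0 - (u1 + (eta / (2 * gamma)) *: wstar))
     + 2 * eta * t%:R * logloss x y u1.
Proof.
elim: t => [|t IH].
  rewrite big_ord0 /=; lra.
rewrite big_ord_recr /=.
have := step u1 hy hx hsep hgamma heta (gd_iter x y eta w0 t).
rewrite -[t.+1]addn1 natrD; lra.
Qed.

Unset Implicit Arguments.

Theorem mainTheorem10 (R : realType) (d n : nat)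
  (x : 'I_n -> 'rV[R]_d) (y : 'I_n -> R) (gamma eta : R)
  (wstar w0 u1 : 'rV[R]_d)
  (hy : forall i, y i = 1 \/ y i = -1)
  (hx : forall i, sqnorm (x i) <= 1)
  (hsep : forall i, y i * dotv (x i) wstar >= gamma)
  (hgamma : 0 < gamma)
  (hwstar : sqnorm wstar = 1)
  (heta : 0 < eta) :
  let u2 := (eta / (2 * gamma)) *: wstar in
  let u := u1 + u2 in
  forall t : nat, (1 <= t)%N ->
    sqnorm (gd_iter x y eta w0 t - u) / (2 * eta * t%:R)
    + t%:R^-1 * \sum_(k < t) logloss x y (gd_iter x y eta w0 k)
    <= logloss x y u1 + sqnorm (w0 - u) / (2 * eta * t%:R).
Proof.
move=> u2 u t ht.
have H := iterb w0 u1 hy hx hsep hgamma heta t.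
rewrite -/u2 -/u in H.
have T0 : 0 < t%:R :> R by rewrite ltr0n.
have c0 : 0 < 2 * eta * t%:R by rewrite mulr_gt0 // mulr_gt0.
set A := sqnorm _ in H *; set S := \sum_(k < t) _ in H *.
set B := sqnorm (w0 - u) in H *; set L := logloss x y u1 in H *.
have -> : A / (2 * eta * t%:R) + t%:R^-1 * S = (A + 2 * eta * S) / (2 * eta * t%:R).
  by field; rewrite !gt_eqF.
have -> : L + B / (2 * eta * t%:R) = (B + 2 * eta * t%:R * L) / (2 * eta * t%:R).
  by field; rewrite !gt_eqF.
by rewrite ler_pM2r ?invr_gt0 // addrC [B + _]addrC.
Qed.
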